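(* Let $\phi$ be a function mapping every non-empty subset of $\mathbb{R}^2$ to a non-empty subset of $\mathbb{R}^2$ that satisfies Properties 1 and 2 below. Let $T=\{T_1,\dots,T_m\}$ be a set of pairwise non-crossing geometric trees in the plane. Then the $\phi$-cover of $T$ is well-defined: any two executions of the merging process described below on $T$ output the same set $\mathcal{C}$, regardless of the arbitrary choices made.
   Context: A geometric tree is a plane straight-line embedding of a tree in $\mathbb{R}^2$ (viewed as a subset of $\mathbb{R}^2$). Property 1: for every non-empty $A\subseteq\mathbb{R}^2$, $A\subseteq\phi(A)$. Property 2: for all non-empty $A,B\subseteq\mathbb{R}^2$, if $A\subseteq\phi(B)$ then $\phi(A)\subseteq\phi(B)$. The merging process: start with $\mathcal{C}=\{\phi(T_i)\mid 1\le i\le m\}$ (a collection of sets, each tracked as a separate element); while the elements of $\mathcal{C}$ are not pairwise disjoint, choose arbitrarily two distinct elements $C,C'$ of $\mathcal{C}$ with $C\cap C'\neq\emptyset$ and replace them in $\mathcal{C}$ by $\phi(C\cup C')$; when the elements are pairwise disjoint, output $\mathcal{C}$. The output is called the $\phi$-cover of $T$. *)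

(* Defs.v *)
From HB Require Import structures.
From mathcomp Require Import all_boot all_order all_algebra.
From mathcomp Require Import classical_sets reals.
From Stdlib Require Import Permutation.
Set Implicit Arguments. Unset Strict Implicit. Unset Printing Implicit Defensive.
Import Order.TTheory GRing.Theory Num.Theory.
Local Open Scope ring_scope.
Local Open Scope classical_set_scope.

Section Geom.
Variable R : realType.

Definition pt2 : Type := (R * R)%type.

Definition segment (p q : pt2) : set pt2 :=
  [set x | exists t : R, 0 <= t <= 1 /\
     x = ((1 - t) * p.1 + t * q.1, (1 - t) * p.2 + t * q.2)].

Definition edge_seg (e : pt2 * pt2) : set pt2 := segment e.1 e.2.

Definition adj (E : seq (pt2 * pt2)) (a b : pt2) : bool :=
  ((a, b) \in E) || ((b, a) \in E).

Definition is_tree (V : seq pt2) (E : seq (pt2 * pt2)) : Prop :=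
  [/\ V != [::], uniq V,
      (forall e, e \in E -> [/\ e.1 \in V, e.2 \in V & e.1 != e.2]),
      (forall u v, u \in V -> v \in V ->
         exists p : seq pt2, path (adj E) u p && (last u p == v))
    & size E = (size V).-1]%N.

Definition is_plane_tree (V : seq pt2) (E : seq (pt2 * pt2)) : Prop :=
  [/\ is_tree V E,
      (forall v e, v \in V -> e \in E -> edge_seg e v -> v = e.1 \/ v = e.2)
    & (forall i j, (i < size E)%N -> (j < size E)%N -> i <> j ->
         let e := nth (0, 0) E i in let f := nth (0, 0) E j in
         edge_seg e `&` edge_seg f `<=`
           [set x | (x = e.1 \/ x = e.2) /\ (x = f.1 \/ x = f.2)])].

Definition gtree : Type := (seq pt2 * seq (pt2 * pt2))%type.

Definition carrier (T : gtree) : set pt2 :=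
  [set x | (x \in T.1) \/ exists2 e, e \in T.2 & edge_seg e x].

Definition non_crossing (T T' : gtree) : Prop :=
  forall e f, e \in T.2 -> f \in T'.2 ->
    edge_seg e `&` edge_seg f `<=`
      [set x | (x = e.1 \/ x = e.2) /\ (x = f.1 \/ x = f.2)].

(* one step: choose two distinct elements C, C' (distinct entries of the
   collection) that intersect, and replace them by phi (C `|` C') *)
Definition merge_step (phi : set pt2 -> set pt2)
    (Cs Cs' : seq (set pt2)) : Prop :=
  exists (C C' : set pt2) (rest : seq (set pt2)),
    [/\ Permutation Cs (C :: C' :: rest), C `&` C' !=set0
      & Cs' = phi (C `|` C') :: rest].

Definition pairwise_disjoint (Cs : seq (set pt2)) : Prop :=
  forall i j, (i < size Cs)%N -> (j < size Cs)%N -> i <> j ->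
    nth set0 Cs i `&` nth set0 Cs j = set0.

Inductive merges (phi : set pt2 -> set pt2) :
    seq (set pt2) -> seq (set pt2) -> Prop :=
  | merges_refl Cs : merges phi Cs Cs
  | merges_step Cs Cs' Cs'' :
      merge_step phi Cs Cs' -> merges phi Cs' Cs'' -> merges phi Cs Cs''.

Definition initial_collection (phi : set pt2 -> set pt2) (Ts : seq gtree) :
  seq (set pt2) := map (fun T => phi (carrier T)) Ts.

Definition merge_output (phi : set pt2 -> set pt2) (Ts : seq gtree)
    (Cs : seq (set pt2)) : Prop :=
  merges phi (initial_collection phi Ts) Cs /\ pairwise_disjoint Cs.

Definition as_set (Cs : seq (set pt2)) : set (set pt2) :=
  [set X | List.In X Cs].

End Geom.

(* Main.v *)
Require Import Defs.
From HB Require Import structures.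
From mathcomp Require Import all_boot all_order all_algebra.
From mathcomp Require Import classical_sets reals.
From Stdlib Require Import Permutation.
Set Implicit Arguments. Unset Strict Implicit.
Import Order.TTheory GRing.Theory Num.Theory.
Local Open Scope ring_scope.
Local Open Scope classical_set_scope.

Lemma In_nthP {A : Type} (d : A) (s : seq A) x :
  List.In x s -> exists i, (i < size s)%N /\ nth d s i = x.
Proof.
elim: s => [|a s IH] //= [->|/IH [i [Hi Hn]]]; first by exists 0%N.
by exists i.+1.
Qed.

Section Gen.
Variable R : realType.
Variable phi : set (pt2 R) -> set (pt2 R).
Hypothesis phi_ne : forall A : set (pt2 R), A !=set0 -> phi A !=set0.
Hypothesis prop1 : forall A : set (pt2 R), A !=set0 -> A `<=` phi A.
Hypothesis prop2 : forall A B : set (pt2 R), A !=set0 -> B !=set0 ->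
     A `<=` phi B -> phi A `<=` phi B.

Definition good1 (Cs : seq (set (pt2 R))) :=
  forall X, List.In X Cs -> exists2 B, B !=set0 & X = phi B.

Definition covered (Ys Cs : seq (set (pt2 R))) :=
  forall Y, List.In Y Ys -> exists2 X, List.In X Cs & Y `<=` X.

Lemma inter_ne (C C' : set (pt2 R)) : C `&` C' !=set0 -> C `|` C' !=set0.
Proof. by case=> x [Hx _]; exists x; left. Qed.

Lemma step1 Ys Cs Cs' : merge_step phi Cs Cs' -> good1 Cs -> covered Ys Cs ->
  good1 Cs' /\ covered Ys Cs'.
Proof.
case=> C [C' [rest [HP Hne ->]]] Hg Hc; split.
- move=> X /= [<-|HX]; first by exists (C `|` C') => //; exact: inter_ne.
  apply: Hg; apply: (Permutation_in _ (Permutation_sym HP)); by right; right.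
- move=> Y /Hc [X HX HYX].
  have := Permutation_in _ HP HX => /= [[EX|[EX|HX']]].
  + exists (phi (C `|` C')); first by left.
    move=> y /HYX Hy; apply: prop1; [exact: inter_ne|]; left; by rewrite EX.
  + exists (phi (C `|` C')); first by left.
    move=> y /HYX Hy; apply: prop1; [exact: inter_ne|]; right; by rewrite EX.
  + by exists X => //; right.
Qed.

Lemma steps1 Ys Cs Cs' : merges phi Cs Cs' -> good1 Cs -> covered Ys Cs ->
  good1 Cs' /\ covered Ys Cs'.
Proof.
elim=> [//|C1 C2 C3 Hs _ IH] Hg Hc.
have [Hg' Hc'] := @step1 Ys _ _ Hs Hg Hc; exact: IH.
Qed.

Lemma disj_eq (Cs : seq (set (pt2 R))) D1 D2 : pairwise_disjoint Cs ->
  List.In D1 Cs -> List.In D2 Cs -> D1 `&` D2 !=set0 -> D1 = D2.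
Proof.
move=> Hd /(In_nthP set0) [i [Hi <-]] /(In_nthP set0) [j [Hj <-]] [x Hx].
case: (eqVneq i j) => [->//|/eqP Hij].
by have := Hd i j Hi Hj Hij; move/seteqP => [/(_ x Hx)].
Qed.

Definition inv2 (Cs1 Cs : seq (set (pt2 R))) :=
  forall X, List.In X Cs -> X !=set0 /\ exists2 D, List.In D Cs1 & X `<=` D.

Lemma step2 Cs1 Cs Cs' : good1 Cs1 -> pairwise_disjoint Cs1 ->
  merge_step phi Cs Cs' -> inv2 Cs1 Cs -> inv2 Cs1 Cs'.
Proof.
move=> Hg Hd [C [C' [rest [HP Hne ->]]]] Hi X /= [<-|HX]; last first.
  by apply: Hi; apply: (Permutation_in _ (Permutation_sym HP)); right; right.
have [_ [D1 HD1 HC1]] := Hi C (Permutation_in _ (Permutation_sym HP) (or_introl erefl)).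
have [_ [D2 HD2 HC2]] :=
  Hi C' (Permutation_in _ (Permutation_sym HP) (or_intror (or_introl erefl))).
have E : D1 = D2.
  apply: (disj_eq Hd HD1 HD2); case: Hne => x [H1 H2]; exists x; split.
  exact: HC1. exact: HC2.
split; first by apply: phi_ne; exact: inter_ne.
exists D1 => //.
have [B HB EB] := Hg _ HD1.
rewrite EB; apply: prop2 => //; first exact: inter_ne.
rewrite -EB => y [/HC1//|/HC2]; by rewrite E.
Qed.

Lemma steps2 Cs1 Cs Cs' : good1 Cs1 -> pairwise_disjoint Cs1 ->
  merges phi Cs Cs' -> inv2 Cs1 Cs -> inv2 Cs1 Cs'.
Proof.
move=> Hg Hd; elim=> [//|C1 C2 C3 Hs _ IH] Hi.
apply: IH; exact: (step2 Hg Hd Hs Hi).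
Qed.

Lemma main (Ts : seq (gtree R)) Cs1 Cs2 :
  (forall T, List.In T Ts -> carrier T !=set0) ->
  merge_output phi Ts Cs1 -> merge_output phi Ts Cs2 ->
  forall X, List.In X Cs2 -> List.In X Cs1.
Proof.
move=> Hne.
have Hg0 : good1 (initial_collection phi Ts).
  move=> X /List.in_map_iff [T [<- HT]]; exists (carrier T) => //; exact: Hne.
have fin : forall Cs, merge_output phi Ts Cs ->
    good1 Cs /\ inv2 Cs (initial_collection phi Ts).
  move=> Cs [Hm Hd].
  have Hc0 : covered [seq carrier T | T <- Ts] (initial_collection phi Ts).
    move=> Y /List.in_map_iff [T [<- HT]]; exists (phi (carrier T)).
      by apply: List.in_map.
    by apply: prop1; apply: Hne.
  have [Hg Hc] := steps1 Hm Hg0 Hc0.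
  split=> // X /List.in_map_iff [T [<- HT]].
  have HTn := Hne T HT.
  split; first exact: phi_ne.
  have [D HD HTD] := Hc (carrier T) (List.in_map _ _ _ HT).
  exists D => //; have [B HB EB] := Hg _ HD.
  rewrite EB; apply: prop2 => //; by rewrite -EB.
move=> H1 H2.
have [Hg1 Hi1] := fin _ H1; have [Hg2 Hi2] := fin _ H2.
have I21 := steps2 Hg1 H1.2 H2.1 Hi1.
have I12 := steps2 Hg2 H2.2 H1.1 Hi2.
move=> X HX.
have [[x Hx] [D HD HXD]] := I21 X HX.
have [_ [X' HX' HDX']] := I12 D HD.
have EX : X = X'.
  apply: (disj_eq H2.2 HX HX'); exists x; split => //; exact/HDX'/HXD.
suff -> : X = D by [].
apply/seteqP; split => // y Hy; rewrite EX; exact: HDX'.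
Qed.

End Gen.

Theorem theorem1 (R : realType) (phi : set (pt2 R) -> set (pt2 R))
  (phi_ne : forall A : set (pt2 R), A !=set0 -> phi A !=set0)
  (prop1 : forall A : set (pt2 R), A !=set0 -> A `<=` phi A)
  (prop2 : forall A B : set (pt2 R), A !=set0 -> B !=set0 ->
     A `<=` phi B -> phi A `<=` phi B)
  (Ts : seq (gtree R))
  (Ts_trees : forall i, (i < size Ts)%N ->
     is_plane_tree (nth (nil, nil) Ts i).1 (nth (nil, nil) Ts i).2)
  (Ts_noncross : forall i j, (i < size Ts)%N -> (j < size Ts)%N -> i <> j ->
     non_crossing (nth (nil, nil) Ts i) (nth (nil, nil) Ts j))
  (Cs1 Cs2 : seq (set (pt2 R))) :
  merge_output phi Ts Cs1 -> merge_output phi Ts Cs2 ->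
  as_set Cs1 = as_set Cs2.
Proof.
have Hne : forall T, List.In T Ts -> carrier T !=set0.
  move=> T /(In_nthP (nil, nil)) [i [Hi ET]].
  have [[Hv _ _ _ _] _ _] := Ts_trees i Hi.
  rewrite ET in Hv; case: T {ET} Hv => [[|v V] E] //= _.
  by exists v; left; rewrite /= in_cons eqxx.
move=> H1 H2; apply/seteqP; split => X /=.
- exact: (main phi_ne prop1 prop2 Hne H2 H1).
- exact: (main phi_ne prop1 prop2 Hne H1 H2).
Qed.
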